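(* Let $(H,k,\chi)$ be an instance of Precoloring Extension with $H=(V,F)$, $V=\{1,\dots,n\}$, $H$ having at least one edge. Construct a $P_n\,|\,\mathrm{conc}\,|\,C_{\max}$ instance as follows: jobs $1,\dots,n$ with $p_j=1$ and conflict graph initially $G=H$; jobs $a,b$ with $p_a=p_b=1$ and jobs $a',b'$ with $p_{a'}=p_{b'}=k-1$, with conflict edges $\{a,a'\},\{b,b'\},\{a,b\}$; for each $j\in V_0$ with $\chi(j)\in\{2,\dots,k-1\}$, jobs $j(1),j(2)$ with $p_{j(1)}=\chi(j)-1$, $p_{j(2)}=k-\chi(j)$ and conflict edges $\{j,j(1)\},\{j,j(2)\},\{j(1),j(2)\},\{a,j\},\{b,j\},\{a,j(2)\},\{b,j(1)\}$; for each $j\in V_0$ with $\chi(j)=1$, a job $j(2)$ with $p_{j(2)}=k-1$ and conflict edges $\{j,j(2)\},\{b,j\},\{a,j(2)\}$; for each $j\in V_0$ with $\chi(j)=k$, a job $j(1)$ with $p_{j(1)}=k-1$ and conflict edges $\{j,j(1)\},\{a,j\},\{b,j(1)\}$. If the constructed instance has a feasible schedule $C$ with $C_{\max}\le k$, then $(H,k,\chi)$ has a solution $\chi':\{1,\dots,n\}\to\{1,\dots,k\}$.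
   Context: Precoloring Extension: given a graph $H=(V,F)$, an integer $k$, and a proper coloring $\chi:V_0\to\{1,\dots,k\}$ of $H[V_0]$ for some $V_0\subseteq V$, a solution is a proper coloring $\chi':V\to\{1,\dots,k\}$ of $H$ with $\chi'(v)=\chi(v)$ for all $v\in V_0$. In $P_n\,|\,\mathrm{conc}\,|\,C_{\max}$, each job $j$ has integer processing time $p_j\ge1$ and release time $0$, and there is a conflict graph $G$; a schedule $C$ assigning each job a completion time $C_j\in\mathbb{N}$ is feasible if $C_j-p_j\ge0$ for all $j$ and $[C_i-p_i,C_i)\cap[C_j-p_j,C_j)=\emptyset$ for all edges $\{i,j\}$ of $G$; $C_{\max}=\max_j C_j$. *)

(* Defs.v *)
From mathcomp Require Import all_boot.
Set Implicit Arguments. Unset Strict Implicit. Unset Printing Implicit Defensive.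

(* Vertices 1..n are represented by 'I_n; a simple graph is a symmetric,
   irreflexive relation. Colours are natural numbers in {1,...,k}. *)
Definition simple_graph (n : nat) (H : rel 'I_n) : Prop :=
  (forall u v, H u v = H v u) /\ (forall v, ~~ H v v).

Definition has_edge (n : nat) (H : rel 'I_n) : Prop := exists u v, H u v.

Definition pce_instance (n : nat) (H : rel 'I_n) (k : nat) (V0 : {set 'I_n})
    (chi : 'I_n -> nat) : Prop :=
  (forall v, v \in V0 -> 1 <= chi v <= k) /\
  (forall u v, u \in V0 -> v \in V0 -> H u v -> chi u != chi v).

Definition pce_solution (n : nat) (H : rel 'I_n) (k : nat) (V0 : {set 'I_n})
    (chi chi' : 'I_n -> nat) : Prop :=
  (forall v, 1 <= chi' v <= k) /\
  (forall u v, H u v -> chi' u != chi' v) /\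
  (forall v, v \in V0 -> chi' v = chi v).

Inductive job (n : nat) : Type :=
| JV of 'I_n
| Ja | Jb
| Ja' | Jb'
| J1 of 'I_n
| J2 of 'I_n.
Arguments Ja {n}. Arguments Jb {n}. Arguments Ja' {n}. Arguments Jb' {n}.

Section Construction.
Variables (n : nat) (H : rel 'I_n) (k : nat) (V0 : {set 'I_n}) (chi : 'I_n -> nat).

Definition mid (j : 'I_n) : bool := (j \in V0) && (2 <= chi j <= k - 1).
Definition one (j : 'I_n) : bool := (j \in V0) && (chi j == 1).
Definition top (j : 'I_n) : bool := (j \in V0) && (chi j == k).

Definition job_exists (x : job n) : bool :=
  match x with
  | J1 j => mid j || top j
  | J2 j => mid j || one j
  | _ => true
  end.

(* processing times: for j(1), chi(j)-1 (= k-1 when chi(j)=k);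
   for j(2), k-chi(j) (= k-1 when chi(j)=1) *)
Definition ptime (x : job n) : nat :=
  match x with
  | JV _ | Ja | Jb => 1
  | Ja' | Jb' => k - 1
  | J1 j => chi j - 1
  | J2 j => k - chi j
  end.

Definition edge0 (x y : job n) : bool :=
  match x, y with
  | JV i, JV j => H i j
  | Ja, Ja' => true
  | Jb, Jb' => true
  | Ja, Jb => true
  | JV j, J1 j' => (j == j') && (mid j || top j)
  | JV j, J2 j' => (j == j') && (mid j || one j)
  | J1 j, J2 j' => (j == j') && mid j
  | Ja, JV j => mid j || top j
  | Jb, JV j => mid j || one j
  | Ja, J2 j => mid j || one j
  | Jb, J1 j => mid j || top j
  | _, _ => false
  end.

Definition conflict (x y : job n) : bool := edge0 x y || edge0 y x.

(* [C_x - p_x, C_x) and [C_y - p_y, C_y) are disjoint (integer endpoints) *)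
Definition disjoint_intervals (s1 e1 s2 e2 : nat) : Prop :=
  ~ exists t : nat, (s1 <= t < e1) && (s2 <= t < e2).

Definition feasible_schedule (C : job n -> nat) : Prop :=
  (forall x, job_exists x -> ptime x <= C x) /\
  (forall x y, job_exists x -> job_exists y -> conflict x y ->
     disjoint_intervals (C x - ptime x) (C x) (C y - ptime y) (C y)).

Definition cmax_le (C : job n -> nat) (T : nat) : Prop :=
  forall x, job_exists x -> C x <= T.

End Construction.

(* Main.v *)
Require Import Defs.
From mathcomp Require Import all_boot.
From mathcomp Require Import zify.
Local Open Scope nat_scope.

Lemma disj_lin s1 e1 s2 e2 : s1 < e1 -> s2 < e2 ->
  disjoint_intervals s1 e1 s2 e2 -> e1 <= s2 \/ e2 <= s1.
Proof.
move=> h1 h2 hd; case: (leqP e1 s2) => a; first by left.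
case: (leqP e2 s1) => b; first by right.
exfalso; apply: hd; exists (maxn s1 s2); apply/andP; split; apply/andP; split; lia.
Qed.

Theorem lemma10 (n : nat) (H : rel 'I_n) (k : nat) (V0 : {set 'I_n})
    (chi : 'I_n -> nat) :
  simple_graph H -> has_edge H -> pce_instance H k V0 chi ->
  (exists C : job n -> nat,
     feasible_schedule H k V0 chi C /\ cmax_le k V0 chi C k) ->
  exists chi' : 'I_n -> nat, pce_solution H k V0 chi chi'.
Proof.
move=> _ _ [hchi _] [C [[hp hdis] hmax]].
have D : forall x y, job_exists k V0 chi x -> job_exists k V0 chi y ->
    conflict H k V0 chi x y -> 0 < ptime k chi x -> 0 < ptime k chi y ->
    C x <= C y - ptime k chi y \/ C y <= C x - ptime k chi x.
  move=> x y ex ey cxy px py.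
  have := hp x ex; have := hp y ey => qy qx.
  have [h|h] := @disj_lin (C x - ptime k chi x) (C x)
     (C y - ptime k chi y) (C y) ltac:(lia) ltac:(lia) (hdis x y ex ey cxy).
  by left. by right.
have B : forall x, job_exists k V0 chi x -> ptime k chi x <= C x <= k.
  by move=> x ex; rewrite hp // hmax.
have Bab := D Ja Jb erefl erefl erefl erefl erefl.
have Ba := B Ja erefl; have Bb := B Jb erefl; simpl in Ba, Bb, Bab.
have k2 : 2 <= k by lia.
have Baa := D Ja Ja' erefl erefl erefl erefl ltac:(simpl; lia).
have Bbb := D Jb Jb' erefl erefl erefl erefl ltac:(simpl; lia).
have Ba' := B Ja' erefl; have Bb' := B Jb' erefl; simpl in *.
have AB : (C Ja = 1 /\ C Jb = k) \/ (C Ja = k /\ C Jb = 1) by lia.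
clear Bab Baa Bbb Ba' Bb' Ba Bb.
exists (fun v => if C Ja == 1 then C (JV v) else k.+1 - C (JV v)).
have BV : forall v, 1 <= C (JV v) <= k by move=> v; exact: (B (JV v) erefl).
split; [|split].
- move=> v; have := BV v; case: ifP => _; lia.
- move=> u v huv; have := D (JV u) (JV v) erefl erefl ltac:(by rewrite /conflict /= huv) erefl erefl.
  have := BV u; have := BV v; simpl; case: ifP => _; lia.
- move=> v vV; have := hchi v vV => cb; have := BV v => bv.
  have [c1|c1] := eqVneq (chi v) 1.
  + have ho : Defs.one V0 chi v by rewrite /Defs.one vV c1.
    have e2 : job_exists k V0 chi (J2 v) by rewrite /= ho orbT.
    have := B _ e2; simpl.
    have := D (JV v) (J2 v) erefl e2 ltac:(by rewrite /conflict /= eqxx ho orbT) erefl ltac:(simpl; lia).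
    have := D Jb (JV v) erefl erefl ltac:(by rewrite /conflict /= ho orbT) erefl erefl.
    have := D Ja (J2 v) erefl e2 ltac:(by rewrite /conflict /= ho orbT) erefl ltac:(simpl; lia).
    simpl; case: AB => -[-> ->]; case: eqP => ?; lia.
  have [ck|ck] := eqVneq (chi v) k.
  + have ho : Defs.top k V0 chi v by rewrite /Defs.top vV; apply/eqP.
    have e1 : job_exists k V0 chi (J1 v) by rewrite /= ho orbT.
    have := B _ e1; simpl.
    have := D (JV v) (J1 v) erefl e1 ltac:(by rewrite /conflict /= eqxx ho orbT) erefl ltac:(simpl; lia).
    have := D Ja (JV v) erefl erefl ltac:(by rewrite /conflict /= ho orbT) erefl erefl.
    have := D Jb (J1 v) erefl e1 ltac:(by rewrite /conflict /= ho orbT) erefl ltac:(simpl; lia).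
    simpl; case: AB => -[-> ->]; case: eqP => ?; lia.
  have ho : Defs.mid k V0 chi v by rewrite /Defs.mid vV; apply/andP; split; lia.
  have e1 : job_exists k V0 chi (J1 v) by rewrite /= ho.
  have e2 : job_exists k V0 chi (J2 v) by rewrite /= ho.
  have := B _ e1; have := B _ e2; simpl.
  have := D (JV v) (J1 v) erefl e1 ltac:(by rewrite /conflict /= eqxx ho) erefl ltac:(simpl; lia).
  have := D (JV v) (J2 v) erefl e2 ltac:(by rewrite /conflict /= eqxx ho) erefl ltac:(simpl; lia).
  have := D (J1 v) (J2 v) e1 e2 ltac:(by rewrite /conflict /= eqxx ho) ltac:(simpl; lia) ltac:(simpl; lia).
  have := D Ja (JV v) erefl erefl ltac:(by rewrite /conflict /= ho) erefl erefl.
  have := D Jb (JV v) erefl erefl ltac:(by rewrite /conflict /= ho) erefl erefl.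
  have := D Ja (J2 v) erefl e2 ltac:(by rewrite /conflict /= ho) erefl ltac:(simpl; lia).
  have := D Jb (J1 v) erefl e1 ltac:(by rewrite /conflict /= ho) erefl ltac:(simpl; lia).
  simpl; case: AB => -[-> ->]; case: eqP => ?; lia.
Qed.
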